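(* Let $R$ be a commutative ring and let $(A,d)$ be a left dg-semiprimary differential graded $R$-algebra. Then: (1) every dg-simple left dg-module $(S,\delta)$ over $(A,d)$ is acyclic; (2) for every dg-maximal left dg-ideal $M$ of $(A,d)$, the inclusion induces an isomorphism $H(M,d)\cong H(A,d)$; (3) if the dg-ideal $(\mathrm{dgrad}_2(A),d)$ is acyclic, then $(A,d)$ is acyclic.
   Context: A differential graded (dg) $R$-algebra $(A,d)$ is a $\mathbb{Z}$-graded $R$-algebra $A$ with an $R$-linear degree-$1$ endomorphism $d$, $d^2=0$, $d(ab)=d(a)b+(-1)^{|a|}a\,d(b)$ for homogeneous $a,b$. A left dg-module $(M,\delta)$ is a graded left $A$-module with a degree-$1$ map $\delta$, $\delta^2=0$, $\delta(am)=d(a)m+(-1)^{|a|}a\,\delta(m)$; dg-submodules are graded submodules stable under $\delta$; $(S,\delta)$ is dg-simple if $S\ne0$ and its only dg-submodules are $0,S$. A left dg-ideal is a dg-submodule of $A$; it is dg-maximal if it is a proper left dg-ideal maximal among proper left dg-ideals. An object is acyclic if its homology $\ker/\operatorname{im}$ vanishes. The dg-radical is $\mathrm{dgrad}_2(A)=\bigcap_{(S,\delta)}\operatorname{ann}(S,\delta)$, the intersection over all dg-simple left dg-modules of their left annihilators in $A$; it is a two-sided dg-ideal. $(A,d)$ is left dg-semiprimary if (i) the dg-algebra $(A/\mathrm{dgrad}_2(A),\bar d)$ is semisimple in the categorical sense, i.e. every short exact sequence of left dg-modules over it splits, and (ii) every homogeneous idempotent of $A/\mathrm{dgrad}_2(A)$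 is the image of a homogeneous idempotent of $A$ under the natural map. *)

(* Defs.v *)
From HB Require Import structures.
From mathcomp Require Import all_boot all_order all_algebra.
Set Implicit Arguments. Unset Strict Implicit. Unset Printing Implicit Defensive.
Import Order.TTheory GRing.Theory Num.Theory.
Local Open Scope ring_scope.

(* Conventions: subsets ("predicates") are Prop-valued, [V -> Prop].
   A Z-grading of an additive group V is a family [P : int -> V -> Prop]
   of homogeneous components. *)

Definition ksign (A : pzRingType) (n : int) : A := (-1) ^+ `|n|%N.

(* V is the internal direct sum of the subgroups P n (n : int). *)
Definition graded_decomposition (V : zmodType) (P : int -> V -> Prop) : Prop :=
  (forall n, P n 0) /\
  (forall n x y, P n x -> P n y -> P n (x + y)) /\
  (forall n x, P n x -> P n (- x)) /\
  (forall x : V, exists (s : seq int) (f : int -> V),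
      (forall n, P n (f n)) /\ x = \sum_(n <- s) f n) /\
  (forall (s : seq int) (f : int -> V), uniq s -> (forall n, P n (f n)) ->
      \sum_(n <- s) f n = 0 -> forall n, n \in s -> f n = 0).

Section DG.
Variables (R : comPzRingType) (A : algType R).

Definition is_dg_algebra (gr : int -> A -> Prop) (d : A -> A) : Prop :=
  graded_decomposition gr /\
  (forall n (r : R) a, gr n a -> gr n (r *: a)) /\
  gr 0 1 /\
  (forall i j a b, gr i a -> gr j b -> gr (i + j) (a * b)) /\
  (forall a b, d (a + b) = d a + d b) /\
  (forall (r : R) a, d (r *: a) = r *: d a) /\
  (forall n a, gr n a -> gr (n + 1) (d a)) /\
  (forall a, d (d a) = 0) /\
  (forall n a b, gr n a -> d (a * b) = d a * b + ksign A n * a * d b).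

Definition is_dg_module (gr : int -> A -> Prop) (d : A -> A)
    (M : lmodType A) (grM : int -> M -> Prop) (delta : M -> M) : Prop :=
  graded_decomposition grM /\
  (forall n (r : R) m, grM n m -> grM n ((r%:A : A) *: m)) /\
  (forall i j (a : A) (m : M), gr i a -> grM j m -> grM (i + j) (a *: m)) /\
  (forall m1 m2, delta (m1 + m2) = delta m1 + delta m2) /\
  (forall n m, grM n m -> grM (n + 1) (delta m)) /\
  (forall m, delta (delta m) = 0) /\
  (forall n (a : A) (m : M), gr n a ->
      delta (a *: m) = d a *: m + ksign A n *: (a *: delta m)).

Definition is_dg_submodule (M : lmodType A) (grM : int -> M -> Prop)
    (delta : M -> M) (N : M -> Prop) : Prop :=
  N 0 /\
  (forall x y, N x -> N y -> N (x + y)) /\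
  (forall (a : A) x, N x -> N (a *: x)) /\
  (forall x, N x -> exists (s : seq int) (f : int -> M),
      (forall n, grM n (f n) /\ N (f n)) /\ x = \sum_(n <- s) f n) /\
  (forall x, N x -> N (delta x)).

Definition dg_simple (M : lmodType A) (grM : int -> M -> Prop)
    (delta : M -> M) : Prop :=
  (exists m : M, m <> 0) /\
  forall N : M -> Prop, is_dg_submodule grM delta N ->
    (forall m, N m -> m = 0) \/ (forall m, N m).

Definition is_left_dg_ideal (gr : int -> A -> Prop) (d : A -> A)
    (I : A -> Prop) : Prop :=
  @is_dg_submodule A^o gr d I.

Definition is_dg_maximal (gr : int -> A -> Prop) (d : A -> A)
    (I : A -> Prop) : Prop :=
  is_left_dg_ideal gr d I /\ (exists a, ~ I a) /\
  forall J : A -> Prop, is_left_dg_ideal gr d J -> (exists a, ~ J a) ->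
    (forall a, I a -> J a) -> forall a, J a -> I a.

Definition dgrad2 (gr : int -> A -> Prop) (d : A -> A) (x : A) : Prop :=
  forall (S : lmodType A) (grS : int -> S -> Prop) (delta : S -> S),
    is_dg_module gr d grS delta -> dg_simple grS delta ->
    forall s : S, x *: s = 0.

Definition acyclic_on (V : zmodType) (N : V -> Prop) (delta : V -> V) : Prop :=
  forall x, N x -> delta x = 0 -> exists y, N y /\ x = delta y.

Definition acyclic (V : zmodType) (delta : V -> V) : Prop :=
  acyclic_on (fun _ => True) delta.

Definition is_dg_morphism (gr : int -> A -> Prop) (d : A -> A)
    (M1 M2 : lmodType A) (gr1 : int -> M1 -> Prop) (delta1 : M1 -> M1)
    (gr2 : int -> M2 -> Prop) (delta2 : M2 -> M2) (f : M1 -> M2) : Prop :=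
  (forall x y, f (x + y) = f x + f y) /\
  (forall (a : A) x, f (a *: x) = a *: f x) /\
  (forall n x, gr1 n x -> gr2 n (f x)) /\
  (forall x, f (delta1 x) = delta2 (f x)).

(* A left dg-module over A/I (I a two-sided dg-ideal) is the same thing as
   a left dg-module over A annihilated by I.  The quotient (A/I, d) is
   semisimple iff every short exact sequence of such dg-modules splits. *)
Definition quotient_dg_semisimple (gr : int -> A -> Prop) (d : A -> A)
    (I : A -> Prop) : Prop :=
  forall (M1 M2 M3 : lmodType A)
    (gr1 : int -> M1 -> Prop) (delta1 : M1 -> M1)
    (gr2 : int -> M2 -> Prop) (delta2 : M2 -> M2)
    (gr3 : int -> M3 -> Prop) (delta3 : M3 -> M3)
    (f : M1 -> M2) (g : M2 -> M3),
    is_dg_module gr d gr1 delta1 -> is_dg_module gr d gr2 delta2 ->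
    is_dg_module gr d gr3 delta3 ->
    (forall x, I x -> forall m : M1, x *: m = 0) ->
    (forall x, I x -> forall m : M2, x *: m = 0) ->
    (forall x, I x -> forall m : M3, x *: m = 0) ->
    is_dg_morphism gr d gr1 delta1 gr2 delta2 f ->
    is_dg_morphism gr d gr2 delta2 gr3 delta3 g ->
    injective f -> (forall z, exists y, g y = z) ->
    (forall y, g y = 0 <-> exists x, y = f x) ->
    exists s : M3 -> M2,
      is_dg_morphism gr d gr3 delta3 gr2 delta2 s /\ (forall z, g (s z) = z).

(* Homogeneous idempotents of A/I lift to homogeneous idempotents of A.
   A homogeneous element of A/I of degree n is the class of some x in A_n;
   it is idempotent iff x*x - x lies in I. *)
Definition lift_hom_idempotents (gr : int -> A -> Prop) (I : A -> Prop) : Prop :=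
  forall n x, gr n x -> I (x * x - x) ->
    exists m e, gr m e /\ e * e = e /\ I (e - x).

Definition left_dg_semiprimary (gr : int -> A -> Prop) (d : A -> A) : Prop :=
  quotient_dg_semisimple gr d (dgrad2 gr d) /\
  lift_hom_idempotents gr (dgrad2 gr d).

End DG.

(* Main.v *)
Require Import Defs.
From HB Require Import structures.
From mathcomp Require Import all_boot all_order all_algebra.
From mathcomp Require Import zify.
From Stdlib Require Import ClassicalEpsilon FunctionalExtensionality PropExtensionality Classical.
Import GRing.Theory.
Local Open Scope ring_scope.
Set Implicit Arguments. Unset Strict Implicit. Unset Printing Implicit Defensive.


Definition nrep (V : zmodType) (P : int -> V -> Prop) (x : V) (s : seq int) (f : int -> V) :=
  [/\ uniq s, (forall n, P n (f n)), (forall n, n \notin s -> f n = 0) &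
      x = \sum_(n <- s) f n].

Definition sg (V : zmodType) (n : int) (v : V) := if odd `|n|%N then - v else v.

Section Graded.
Variables (V : zmodType) (P : int -> V -> Prop).
Hypotheses (P0 : forall n, P n 0) (PD : forall n x y, P n x -> P n y -> P n (x + y)).

Lemma sum_support (s t : seq int) (f : int -> V) :
  uniq s -> uniq t -> {subset s <= t} -> (forall n, n \notin s -> f n = 0) ->
  \sum_(n <- t) f n = \sum_(n <- s) f n.
Proof.
move=> us ut st f0.
rewrite (bigID (fun n => n \in s)) /= [X in _ + X]big1 ?addr0; last by move=> n /f0.
rewrite -big_filter; apply: perm_big; apply: uniq_perm => //.
  by rewrite filter_uniq.
by move=> x; rewrite mem_filter; case xs: (x \in s) => //=; rewrite st.
Qed.

Lemma norm_rep (Q : V -> Prop) (Q0 : Q 0) (QD : forall x y, Q x -> Q y -> Q (x + y))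
  (l : seq (int * V)) : (forall p, p \in l -> P p.1 p.2 /\ Q p.2) ->
  exists s f, [/\ uniq s, (forall n, P n (f n) /\ Q (f n)),
     (forall n, n \notin s -> f n = 0) & \sum_(p <- l) p.2 = \sum_(n <- s) f n].
Proof.
elim: l => [|[n v] l IH] Hl.
  by exists [::], (fun _ => 0); split => //; rewrite !big_nil.
have [|s [f [us Pf f0 E]]] := IH.
  by move=> p pl; apply: Hl; rewrite in_cons pl orbT.
have [Pv Qv] := Hl (n, v) (mem_head _ _).
rewrite big_cons E /=.
case ns: (n \in s).
  exists s, (fun k => if k == n then v + f n else f k); split => //.
  - move=> k; case: eqP => [->|_]; last exact: Pf.
    by have [? ?] := Pf n; split; [apply: PD|apply: QD].
  - move=> k ks; case: eqP => [kn|_]; last exact: f0.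
    by rewrite kn ns in ks.
  rewrite (bigD1_seq n) //= (bigD1_seq n ns us) /= eqxx addrA; congr (_ + _).
  by apply: eq_bigr => k /negbTE ->.
exists (n :: s), (fun k => if k == n then v else f k); split => //.
- by rewrite /= ns.
- by move=> k; case: eqP => [->|_]; [split|apply: Pf].
- move=> k; rewrite in_cons negb_or => /andP [/negbTE -> ks]; exact: f0.
rewrite big_cons eqxx; congr (_ + _); rewrite big_seq_cond [RHS]big_seq_cond.
apply: eq_bigr => k /andP [ks _]; case: eqP => // kn.
by rewrite kn ns in ks.
Qed.

End Graded.

Section Graded2.
Variables (V : zmodType) (P : int -> V -> Prop).
Hypothesis HP : graded_decomposition P.
Let P0 : forall n, P n 0. Proof. by case: HP. Qed.
Let PD : forall n x y, P n x -> P n y -> P n (x + y). Proof. by case: HP => _ []. Qed.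
Let PN : forall n x, P n x -> P n (- x). Proof. by case: HP => _ [_ []]. Qed.
Local Notation nrep := (nrep P).
Implicit Types (v w x y : V).

Lemma nrep_exists x : exists s f, nrep x s f.
Proof.
have [_ [_ [_ [Hex _]]]] := HP.
have [s [f [Pf ->]]] := Hex x.
have [|t [g [ut Pg g0 E]]] := @norm_rep _ _ P0 PD (fun _ => True) I (fun _ _ _ _ => I)
   [seq (n, f n) | n <- s].
  by move=> p /mapP [n _ ->].
exists t, g; split => //; first by move=> n; case: (Pg n).
by rewrite big_map in E.
Qed.

Lemma nrep_uniq x s f t g : nrep x s f -> nrep x t g -> forall n, f n = g n.
Proof.
move=> [us Pf f0 Ex] [ut Pg g0 Ex'] n.
have [_ [_ [_ [_ Hu]]]] := HP.
set u := undup (s ++ t).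
have su : {subset s <= u} by move=> k ks; rewrite mem_undup mem_cat ks.
have tu : {subset t <= u} by move=> k ks; rewrite mem_undup mem_cat ks orbT.
have H := Hu u (fun k => f k - g k) (undup_uniq _) (fun k => PD (Pf k) (PN (Pg k))).
have := H _; rewrite sumrB (sum_support us (undup_uniq _) su f0)
   (sum_support ut (undup_uniq _) tu g0) -Ex -Ex' subrr => /(_ erefl) {}H.
case nu: (n \in u); first by apply/eqP; rewrite -subr_eq0; move/(_ n nu): H => /= ->.
have ns : n \notin s by apply/negP => /su; rewrite nu.
have nt : n \notin t by apply/negP => /tu; rewrite nu.
by rewrite f0 ?g0.
Qed.

Lemma nrep_add x s f y t g : nrep x s f -> nrep y t g ->
  nrep (x + y) (undup (s ++ t)) (fun n => f n + g n).
Proof.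
move=> [us Pf f0 Ex] [ut Pg g0 Ey].
have su : {subset s <= undup (s ++ t)} by move=> k ks; rewrite mem_undup mem_cat ks.
have tu : {subset t <= undup (s ++ t)} by move=> k ks; rewrite mem_undup mem_cat ks orbT.
split.
- exact: undup_uniq.
- by move=> n; apply: PD.
- move=> n; rewrite mem_undup mem_cat negb_or => /andP [ns nt].
  by rewrite f0 // g0 // addr0.
rewrite big_split /= (sum_support us (undup_uniq _) su f0).
by rewrite (sum_support ut (undup_uniq _) tu g0) Ex Ey.
Qed.

Lemma nrep_hom n x : P n x -> nrep x [:: n] (fun k => if k == n then x else 0).
Proof.
move=> Px; split => //.
- by move=> k; case: eqP => [->|].
- by move=> k; rewrite in_cons negb_or => /andP [/negbTE -> _].
by rewrite big_seq1 eqxx.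
Qed.

Definition rep_pick (x : V) : seq int * (int -> V) :=
  proj1_sig (constructive_indefinite_description _
    (let: ex_intro s (ex_intro f H) := nrep_exists x in
       ex_intro (fun p : seq int * (int -> V) => nrep x p.1 p.2) (s, f) H)).

Definition sup x := (rep_pick x).1.
Definition hcomp x := (rep_pick x).2.

Lemma comp_spec x : nrep x (sup x) (hcomp x).
Proof.
rewrite /sup /hcomp /rep_pick.
by case: constructive_indefinite_description.
Qed.

Lemma compE x s f n : nrep x s f -> hcomp x n = f n.
Proof. by move=> H; apply: nrep_uniq (comp_spec x) H n. Qed.


Lemma sgD n v w : sg n (v + w) = sg n v + sg n w.
Proof. by rewrite /sg; case: (odd `|n|%N); rewrite ?opprD. Qed.
Lemma sgN n v : sg n (- v) = - sg n v.
Proof. by rewrite /sg; case: (odd `|n|%N). Qed.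
Lemma sg0 n : sg n (0 : V) = 0.
Proof. by rewrite /sg; case: (odd `|n|%N); rewrite ?oppr0. Qed.
Lemma sgK n v : sg n (sg n v) = v.
Proof. by rewrite /sg; case: (odd `|n|%N); rewrite ?opprK. Qed.
Lemma sgS n v : sg (n + 1) v = - sg n v.
Proof.
rewrite /sg; have -> : odd `|(n + 1)%R|%N = ~~ odd `|n|%N by lia.
by case: (odd `|n|%N); rewrite ?opprK.
Qed.
Lemma sgsg m n v : sg m (sg n v) = sg (m + n) v.
Proof.
rewrite /sg; have -> : odd `|(m + n)%R|%N = odd `|m|%N (+) odd `|n|%N by lia.
by case: (odd `|m|%N); case: (odd `|n|%N); rewrite ?opprK.
Qed.
Lemma Psg n m v : P m v -> P m (sg n v).
Proof. by rewrite /sg; case: (odd `|n|%N) => //; apply: PN. Qed.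

Definition ev (x : V) := \sum_(n <- sup x) sg n (hcomp x n).

Lemma evE x s f : nrep x s f -> ev x = \sum_(n <- s) sg n (f n).
Proof.
move=> H; have [us Pf f0 Ex] := H; have [us' Pf' f0' Ex'] := comp_spec x.
set u := undup (sup x ++ s).
have su : {subset sup x <= u} by move=> k ks; rewrite mem_undup mem_cat ks.
have tu : {subset s <= u} by move=> k ks; rewrite mem_undup mem_cat ks orbT.
rewrite /ev -(sum_support (f := fun n => sg n (hcomp x n)) us' (undup_uniq _) su); last first.
  by move=> n /f0' ->; rewrite sg0.
rewrite -(sum_support (f := fun n => sg n (f n)) us (undup_uniq _) tu); last first.
  by move=> n /f0 ->; rewrite sg0.
by apply: eq_bigr => n _; rewrite (compE _ H).
Qed.

Lemma evD x y : ev (x + y) = ev x + ev y.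
Proof.
rewrite (evE (nrep_add (comp_spec x) (comp_spec y))).
rewrite (evE (comp_spec x)) (evE (comp_spec y)).
have [us Pf f0 Ex] := comp_spec x; have [ut Pg g0 Ey] := comp_spec y.
have su : {subset sup x <= undup (sup x ++ sup y)} by move=> k ks; rewrite mem_undup mem_cat ks.
have tu : {subset sup y <= undup (sup x ++ sup y)} by move=> k ks; rewrite mem_undup mem_cat ks orbT.
rewrite -(sum_support (f := fun n => sg n (hcomp x n)) us (undup_uniq _) su); last first.
  by move=> n /f0 ->; rewrite sg0.
rewrite -(sum_support (f := fun n => sg n (hcomp y n)) ut (undup_uniq _) tu); last first.
  by move=> n /g0 ->; rewrite sg0.
by rewrite -big_split; apply: eq_bigr => n _; rewrite sgD.
Qed.

Lemma ev0 : ev 0 = 0.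
Proof. by apply: (addrI (ev 0)); rewrite -evD !addr0. Qed.

Lemma ev_hom n x : P n x -> ev x = sg n x.
Proof. by move=> Px; rewrite (evE (nrep_hom Px)) big_seq1 eqxx. Qed.

Lemma ev_sum (I : Type) (r : seq I) (F : I -> V) :
  ev (\sum_(i <- r) F i) = \sum_(i <- r) ev (F i).
Proof. exact: (big_morph ev evD ev0). Qed.

Lemma evK x : ev (ev x) = x.
Proof.
have H := comp_spec x; have [us Pf f0 Ex] := H.
have H' : nrep (ev x) (sup x) (fun n => sg n (hcomp x n)).
  split => //; first by move=> n; apply: Psg.
  by move=> n /f0 ->; rewrite sg0.
by rewrite (evE H'); rewrite [RHS]Ex; apply: eq_bigr => n _; rewrite sgK.
Qed.

Lemma P_ev n x : P n x -> P n (ev x).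
Proof. by move=> Px; rewrite (ev_hom Px); apply: Psg. Qed.

End Graded2.


Record subm_closed (A : pzRingType) (N : lmodType A) (P : N -> Prop) : Prop :=
  SubmClosed { sc0 : P 0; scD : forall x y, P x -> P y -> P (x + y);
               scZ : forall a x, P x -> P (a *: x) }.

Definition canon (N : zmodType) (P : N -> Prop) (x : N) : N :=
  epsilon (inhabits 0) (fun y => P (x - y)).

Section Quot.
Variables (A : pzRingType) (N : lmodType A) (P : N -> Prop) (HP : subm_closed P).

Lemma scN x : P x -> P (- x).
Proof. by move=> Px; rewrite -scaleN1r; apply: (scZ HP). Qed.
Lemma scB x y : P x -> P y -> P (x - y).
Proof. by move=> Px Py; apply: (scD HP) => //; apply: scN. Qed.

Lemma canon_spec x : P (x - canon P x).
Proof.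
rewrite /canon; apply: (epsilon_spec (inhabits 0) (fun y => P (x - y))).
by exists x; rewrite subrr; apply: (sc0 HP).
Qed.

Lemma canon_eq x y : P (x - y) -> canon P x = canon P y.
Proof.
move=> Pxy; rewrite /canon; congr epsilon; apply: functional_extensionality => z.
apply: propositional_extensionality; split => H.
  by have := scB H Pxy; rewrite opprB addrC addrA subrK.
by have := scD HP Pxy H; rewrite addrA subrK.
Qed.

Lemma canon_idem x : canon P (canon P x) = canon P x.
Proof. by apply: canon_eq; rewrite -opprB; apply: scN; apply: canon_spec. Qed.

Definition Qt (_ : subm_closed P) : Type := {x : N | canon P x == x}.
HB.instance Definition _ := Choice.on (Qt HP).

Definition qpi (x : N) : Qt HP := exist _ (canon P x) (introT eqP (canon_idem x)).

Lemma qpi_eq x y : qpi x = qpi y <-> P (x - y).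
Proof.
split => [E|H]; last by apply: val_inj; rewrite /= (canon_eq H).
have E' : canon P x = canon P y by move: (congr1 val E).
have := scB (canon_spec x) (canon_spec y).
rewrite E' opprB addrA subrK.
done.
Qed.

Lemma qpiK (q : Qt HP) : qpi (val q) = q.
Proof. by case: q => x Hx; apply: val_inj => /=; apply/eqP. Qed.

Lemma qpi_val x : P (val (qpi x) - x).
Proof. by rewrite -opprB; apply: scN; apply: canon_spec. Qed.

Definition qadd (q1 q2 : Qt HP) := qpi (val q1 + val q2).
Definition qopp (q : Qt HP) := qpi (- val q).
Definition qzero := qpi 0.
Definition qscale (a : A) (q : Qt HP) := qpi (a *: val q).

Lemma qaddE x y : qadd (qpi x) (qpi y) = qpi (x + y).
Proof.
apply/qpi_eq; have := scD HP (qpi_val x) (qpi_val y).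
by rewrite opprD addrACA.
Qed.
Lemma qoppE x : qopp (qpi x) = qpi (- x).
Proof. by apply/qpi_eq; have := scN (qpi_val x); rewrite opprB addrC opprK. Qed.
Lemma qscaleE a x : qscale a (qpi x) = qpi (a *: x).
Proof. by apply/qpi_eq; have := scZ HP a (qpi_val x); rewrite scalerBr. Qed.

Lemma qelim (Pr : Qt HP -> Prop) : (forall x, Pr (qpi x)) -> forall q, Pr q.
Proof. by move=> H q; rewrite -(qpiK q). Qed.

Lemma qaddA : associative qadd.
Proof.
move=> q1 q2 q3; elim/qelim: q1; elim/qelim: q2; elim/qelim: q3 => x y z.
by rewrite !qaddE addrA.
Qed.
Lemma qaddC : commutative qadd.
Proof. by move=> q1 q2; elim/qelim: q1; elim/qelim: q2 => x y; rewrite !qaddE addrC. Qed.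
Lemma qadd0 : left_id qzero qadd.
Proof. by move=> q; elim/qelim: q => x; rewrite /qzero qaddE add0r. Qed.
Lemma qaddN : left_inverse qzero qopp qadd.
Proof. by move=> q; elim/qelim: q => x; rewrite qoppE qaddE addNr. Qed.

HB.instance Definition _ := GRing.isZmodule.Build (Qt HP) qaddA qaddC qadd0 qaddN.

Lemma qpiD x y : qpi (x + y) = qpi x + qpi y.
Proof. by rewrite -qaddE. Qed.

Lemma qscaleA a b v : qscale a (qscale b v) = qscale (a * b) v.
Proof. by elim/qelim: v => x; rewrite !qscaleE scalerA. Qed.
Lemma qscale1 : left_id 1 qscale.
Proof. by move=> v; elim/qelim: v => x; rewrite !qscaleE scale1r. Qed.
Lemma qscaleDr : right_distributive qscale +%R.
Proof.
move=> a u v; elim/qelim: u; elim/qelim: v => x y.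
by rewrite -qpiD !qscaleE scalerDr qpiD.
Qed.
Lemma qscaleDl v : {morph qscale^~ v : a b / a + b}.
Proof.
move=> a b; elim/qelim: v => x /=.
by rewrite !qscaleE scalerDl qpiD.
Qed.

HB.instance Definition _ := GRing.Zmodule_isLmodule.Build A (Qt HP) qscaleA qscale1 qscaleDr qscaleDl.

Lemma qpiZ a x : qpi (a *: x) = a *: qpi x.
Proof. by rewrite -qscaleE. Qed.
Lemma qpi0 : qpi 0 = 0.
Proof. by []. Qed.
Lemma qpi_eq0 x : qpi x = 0 <-> P x.
Proof. by rewrite -qpi0 qpi_eq subr0. Qed.

End Quot.


Section Cone.
Variables (R : comPzRingType) (A : algType R) (gr : int -> A -> Prop) (d : A -> A).
Variables (N : lmodType A) (grN : int -> N -> Prop) (dl : N -> N).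
Hypothesis HN : is_dg_module gr d grN dl.

Let HG : graded_decomposition grN. Proof. by case: HN. Qed.
Let P0 : forall n, grN n 0. Proof. by case: HG. Qed.
Let PD : forall n x y, grN n x -> grN n y -> grN n (x + y). Proof. by case: HG => _ []. Qed.
Let PN : forall n x, grN n x -> grN n (- x). Proof. by case: HG => _ [_ []]. Qed.
Let Hex : forall x : N, exists (s : seq int) (f : int -> N),
      (forall n, grN n (f n)) /\ x = \sum_(n <- s) f n.
Proof. by case: HG => _ [_ [_ []]]. Qed.
Let Hun : forall (s : seq int) (f : int -> N), uniq s -> (forall n, grN n (f n)) ->
      \sum_(n <- s) f n = 0 -> forall n, n \in s -> f n = 0.
Proof. by case: HG => _ [_ [_ []]]. Qed.
Let Hr : forall n (r : R) m, grN n m -> grN n ((r%:A : A) *: m).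
Proof. by case: HN => _ []. Qed.
Let Hact : forall i j (a : A) (m : N), gr i a -> grN j m -> grN (i + j) (a *: m).
Proof. by case: HN => _ [_ []]. Qed.
Lemma dlD x y : dl (x + y) = dl x + dl y.
Proof. by case: HN => _ [_ [_ []]]. Qed.
Let Hdeg : forall n m, grN n m -> grN (n + 1) (dl m).
Proof. by case: HN => _ [_ [_ [_ []]]]. Qed.
Lemma dlK m : dl (dl m) = 0.
Proof. by case: HN => _ [_ [_ [_ [_ []]]]]. Qed.
Let Hleib : forall n (a : A) (m : N), gr n a ->
      dl (a *: m) = d a *: m + ksign A n *: (a *: dl m).
Proof. by case: HN => _ [_ [_ [_ [_ []]]]]. Qed.

Lemma dl0 : dl 0 = 0.
Proof. by apply: (addrI (dl 0)); rewrite -dlD !addr0. Qed.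
Lemma dlN x : dl (- x) = - dl x.
Proof. by apply: (addrI (dl x)); rewrite -dlD !subrr dl0. Qed.
Lemma dl_sum (I : Type) (r : seq I) (F : I -> N) :
  dl (\sum_(i <- r) F i) = \sum_(i <- r) dl (F i).
Proof. exact: (big_morph dl dlD dl0). Qed.
Lemma dl_sg n x : dl (sg n x) = sg n (dl x).
Proof. by rewrite /sg; case: (odd _); rewrite ?dlN. Qed.

Lemma ksE i (w : N) : ksign A i *: w = sg i w.
Proof. by rewrite /ksign -signr_odd scaler_sign. Qed.

Local Notation ep := (ev HG).

Lemma ev_dl x : ep (dl x) = - dl (ep x).
Proof.
have [us Pf f0 Ex] := comp_spec HG x.
rewrite {1}Ex dl_sum ev_sum (evE HG (comp_spec HG x)) dl_sum -sumrN.
apply: eq_bigr => n _.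
by rewrite (ev_hom HG (Hdeg (Pf n))) sgS dl_sg.
Qed.

Lemma ev_act i a x : gr i a -> ep (a *: x) = ksign A i *: (a *: ep x).
Proof.
move=> Ha; have [us Pf f0 Ex] := comp_spec HG x.
rewrite {1}Ex scaler_sumr ev_sum (evE HG (comp_spec HG x)) scaler_sumr scaler_sumr.
apply: eq_bigr => n _.
rewrite (ev_hom HG (Hact Ha (Pf n))) ksE /sg.
have -> : odd `|(i + n)%R|%N = odd `|i|%N (+) odd `|n|%N by lia.
by case: (odd `|i|%N); case: (odd `|n|%N); rewrite /= ?scalerN ?opprK.
Qed.

Definition grSh (n : int) (y : N) := grN (n - 1) y.

Lemma shift_uniq (s : seq int) (F : int -> N) : uniq s ->
  (forall n, grN (n - 1) (F n)) -> \sum_(n <- s) F n = 0 -> forall n, n \in s -> F n = 0.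
Proof.
move=> us HF E n ns.
have := @Hun [seq m - 1 | m <- s] (fun m => F (m + 1)).
rewrite map_inj_uniq; last by move=> a b /addIr.
move=> /(_ us) H.
have := H _ _ (n - 1); rewrite subrK; apply; last exact: map_f.
  by move=> m; have := HF (m + 1); rewrite addrK.
by rewrite big_map; under eq_bigr do rewrite subrK.
Qed.

Lemma shift_dg : is_dg_module gr d grSh dl.
Proof.
split; last split; last split; last split; last split; last split.
- split; first by move=> n; apply: P0.
  split; first by move=> n x y; apply: PD.
  split; first by move=> n x; apply: PN.
  split; last exact: shift_uniq.
  move=> x; have [s [f [Pf Ex]]] := Hex x.
  exists [seq n + 1 | n <- s], (fun m => f (m - 1)); split.
    by move=> n; rewrite /grSh; apply: Pf.
  by rewrite big_map; under eq_bigr do rewrite addrK.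
- by move=> n r m; apply: Hr.
- by move=> i j a m Ha Hm; rewrite /grSh -addrA; apply: Hact.
- exact: dlD.
- by move=> n m; rewrite /grSh => /Hdeg; rewrite subrK addrK.
- exact: dlK.
- exact: Hleib.
Qed.

Definition Cn := (N * N)%type.
Definition grC (n : int) (p : Cn) := grN n p.1 /\ grN (n - 1) p.2.
Definition dC (p : Cn) : Cn := (dl p.1, ep p.1 + dl p.2).

Lemma sum_pair (I : Type) (r : seq I) (F : I -> Cn) :
  \sum_(i <- r) F i = (\sum_(i <- r) (F i).1, \sum_(i <- r) (F i).2).
Proof. by elim: r => [|i r IH]; rewrite ?big_nil ?big_cons //= IH. Qed.

Lemma cone_dg : is_dg_module gr d grC dC.
Proof.
split; last split; last split; last split; last split; last split.
- split; first by move=> n; split; apply: P0.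
  split; first by move=> n x y [] ? ? [] ? ?; split; apply: PD.
  split; first by move=> n x [] ? ?; split; apply: PN.
  split.
    move=> [x y]; have [s [f [Pf Ex]]] := Hex x; have [t [g [Pg Ey]]] := Hex y.
    have [|u [h [uu Ph h0 E]]] := @norm_rep _ grC (fun n => conj (P0 n) (P0 _))
         (fun n x y Hx Hy => conj (PD Hx.1 Hy.1) (PD Hx.2 Hy.2)) (fun _ => True) I
         (fun _ _ _ _ => I)
         ([seq (n, (f n, 0)) | n <- s] ++ [seq (n + 1, (0, g n)) | n <- t]).
      move=> p; rewrite mem_cat => /orP [] /mapP [n _ ->]; split => //; split => //=.
      by rewrite addrK.
    exists u, h; split; first by move=> n; case: (Ph n).
    rewrite -E big_cat !big_map /= sum_pair [X in _ = _ + X]sum_pair /=.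
    by rewrite !big1_eq -Ex -Ey; apply: injective_projections => /=; rewrite ?addr0 ?add0r.
  move=> s F us HF; rewrite sum_pair => [[E1 E2]] n ns.
  have h1 := Hun us (fun n => (HF n).1) E1 ns.
  have h2 := shift_uniq us (fun n => (HF n).2) E2 ns.
  by rewrite [F n]surjective_pairing h1 h2.
- by move=> n r [x y] [] ? ?; split; apply: Hr.
- move=> i j a [x y] Ha [] ? ?; split; first exact: Hact.
  by rewrite /= -addrA; apply: Hact.
- move=> [x1 y1] [x2 y2]; rewrite /dC /= dlD evD dlD; congr (_, _).
  by rewrite addrACA.
- move=> n [x y] [] /= Hx Hy; split; first exact: Hdeg.
  rewrite /= addrK; apply: PD; first exact: P_ev.
  by have := Hdeg Hy; rewrite subrK.
- move=> [x y]; rewrite /dC /= dlK dlD ev_dl dlK addr0 addNr.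
  done.
  move=> n a [x y] Ha; rewrite /dC /= (Hleib _ Ha) (ev_act _ Ha) (Hleib y Ha).
  apply: injective_projections => /=; rewrite ?scalerDr //.
  by rewrite addrCA.
Qed.

Lemma cone_acyclic (J : A -> Prop) :
  quotient_dg_semisimple gr d J ->
  (forall x, J x -> forall m : N, x *: m = 0) -> acyclic dl.
Proof.
move=> Hss HJ.
have := @Hss N Cn N grSh dl grC dC grN dl (fun y => (0, y)) fst shift_dg cone_dg HN HJ.
case.
- by move=> x Jx [a b]; apply: injective_projections => /=; rewrite ?(HJ x Jx a) ?(HJ x Jx b).
- exact: HJ.
- split; first by move=> x y; apply: injective_projections => /=; rewrite ?addr0.
  split; first by move=> a x; apply: injective_projections => /=; rewrite ?scaler0.
  split; first by move=> n x Hx; split => //; apply: P0.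
  by move=> x; rewrite /dC /= dl0 ev0 add0r.
- split => //; split => //; split => //.
  by move=> n [] ? ? [].
- by move=> x y [].
- by move=> z; exists (z, 0).
- move=> [x y]; split => [/= ->|[z [-> _]]] //; by exists y.
move=> s [[sD [sZ [sG sdl]]] gs] z _ dz.
have s0 : s 0 = 0 by apply: (addrI (s 0)); rewrite -sD !addr0.
have : dC (s z) = 0 by rewrite -sdl dz s0.
move: (gs z); case: (s z) => x y /= -> [] E1 E2.
exists (ep y); split => //.
have Ey : ep z = - dl y by apply/eqP; rewrite -subr_eq0 opprK E2.
have evN : forall w, ep (- w) = - ep w.
  by move=> w; apply: (addrI (ep w)); rewrite -evD !subrr ev0.
by rewrite -(evK HG z) Ey evN ev_dl opprK.
Qed.

End Cone.


Lemma subm_of (R : comPzRingType) (A : algType R) (N : lmodType A) grN (dl : N -> N) (P : N -> Prop) :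
  is_dg_submodule grN dl P -> subm_closed P.
Proof. by case=> P0 [PD [PZ _]]; split. Qed.

Section QDG.
Variables (R : comPzRingType) (A : algType R) (gr : int -> A -> Prop) (d : A -> A).
Variables (N : lmodType A) (grN : int -> N -> Prop) (dl : N -> N).
Hypothesis HN : is_dg_module gr d grN dl.
Variable P : N -> Prop.
Hypothesis HPd : is_dg_submodule grN dl P.

Let HPc := subm_of HPd.
Let HG : graded_decomposition grN. Proof. by case: HN. Qed.
Let P0 : forall n, grN n 0. Proof. by case: HG. Qed.
Let PD : forall n x y, grN n x -> grN n y -> grN n (x + y). Proof. by case: HG => _ []. Qed.
Let Hex : forall x : N, exists (s : seq int) (f : int -> N),
      (forall n, grN n (f n)) /\ x = \sum_(n <- s) f n.
Proof. by case: HG => _ [_ [_ []]]. Qed.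
Let Hr : forall n (r : R) m, grN n m -> grN n ((r%:A : A) *: m).
Proof. by case: HN => _ []. Qed.
Let Hact : forall i j (a : A) (m : N), gr i a -> grN j m -> grN (i + j) (a *: m).
Proof. by case: HN => _ [_ []]. Qed.
Let Hdeg : forall n m, grN n m -> grN (n + 1) (dl m).
Proof. by case: HN => _ [_ [_ [_ []]]]. Qed.
Let Hleib : forall n (a : A) (m : N), gr n a ->
      dl (a *: m) = d a *: m + ksign A n *: (a *: dl m).
Proof. by case: HN => _ [_ [_ [_ [_ []]]]]. Qed.
Let Pgr : forall x, P x -> exists (s : seq int) (f : int -> N),
      (forall n, grN n (f n) /\ P (f n)) /\ x = \sum_(n <- s) f n.
Proof. by case: HPd => _ [_ [_ []]]. Qed.
Let Pdl : forall x, P x -> P (dl x).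
Proof. by case: HPd => _ [_ [_ []]]. Qed.

Definition Qm := Qt HPc.
Definition grQ (n : int) (q : Qm) := exists x, grN n x /\ q = qpi HPc x.
Definition dQ (q : Qm) : Qm := qpi HPc (dl (val q)).

Lemma qpiN x : qpi HPc (- x) = - qpi HPc x.
Proof. by rewrite -scaleN1r qpiZ scaleN1r. Qed.
Lemma qpi_sum (I : Type) (r : seq I) (F : I -> N) :
  qpi HPc (\sum_(i <- r) F i) = \sum_(i <- r) qpi HPc (F i).
Proof. exact: (big_morph _ (qpiD HPc) (qpi0 HPc)). Qed.

Lemma dQE x : dQ (qpi HPc x) = qpi HPc (dl x).
Proof.
apply/qpi_eq; rewrite -(dlN HN) -(dlD HN); apply: Pdl; exact: qpi_val.
Qed.

Lemma Q_dg : is_dg_module gr d grQ dQ.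
Proof.
split; last split; last split; last split; last split; last split.
- split; first by move=> n; exists 0; split.
  split; first by move=> n _ _ [x [Hx ->]] [y [Hy ->]]; exists (x + y); rewrite qpiD; split => //; apply: PD.
  split.
    move=> n _ [x [Hx ->]]; exists (- x); rewrite qpiN; split => //.
    by case: HG => _ [_ [PN _]]; apply: PN.
  split.
    move=> q; have [s [f [Pf Ex]]] := Hex (val q).
    exists s, (fun n => qpi HPc (f n)); split; first by move=> n; exists (f n).
    by rewrite -qpi_sum -Ex qpiK.
  move=> s F us HF E n ns.
  pose G k := proj1_sig (constructive_indefinite_description _ (HF k)).
  have HGk k : grN k (G k) /\ F k = qpi HPc (G k).
    by rewrite /G; case: constructive_indefinite_description.
  have PG : P (\sum_(k <- s) G k).
    apply/(qpi_eq0 HPc); rewrite qpi_sum; transitivity (\sum_(k <- s) F k); last exact: E. apply: eq_bigr => k _.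
    by case: (HGk k).
  have [t [H [PH EH]]] := Pgr PG.
  have [|t' [H' [ut' PH' H0 E']]] := @norm_rep _ grN P0 PD P (sc0 HPc) (scD HPc)
       [seq (k, H k) | k <- t].
    by move=> p /mapP [k _ ->]; apply: PH.
  rewrite big_map -EH in E'.
  have rep1 : nrep grN (\sum_(k <- s) G k) s (fun k => if k \in s then G k else 0).
    split => //.
    - by move=> k; case: ifP => _; [case: (HGk k)|apply: P0].
    - by move=> k /negbTE ->.
    by rewrite big_seq_cond [RHS]big_seq_cond; apply: eq_bigr => k /andP [-> _].
  have rep2 : nrep grN (\sum_(k <- s) G k) t' H'.
    by split => //; move=> k; case: (PH' k).
  have := nrep_uniq HG rep1 rep2 n; rewrite ns => EG.
  have [_ ->] := HGk n; apply/(qpi_eq0 HPc); rewrite EG; by case: (PH' n).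
- by move=> n r _ [x [Hx ->]]; exists (r%:A *: x); rewrite qpiZ; split => //; apply: Hr.
- by move=> i j a _ Ha [x [Hx ->]]; exists (a *: x); rewrite qpiZ; split => //; apply: Hact.
- move=> q1 q2; elim/qelim: q1 => x; elim/qelim: q2 => y.
  rewrite -qpiD !dQE -qpiD.
  by rewrite (dlD HN).
- by move=> n _ [x [Hx ->]]; rewrite dQE; exists (dl x); split => //; apply: Hdeg.
- by move=> q; elim/qelim: q => x; rewrite !dQE (dlK HN).
- move=> n a q Ha; elim/qelim: q => x; rewrite -qpiZ !dQE (Hleib _ Ha) qpiD !qpiZ.
  done.
Qed.

Lemma rel_acyclic (J : A -> Prop) : quotient_dg_semisimple gr d J ->
  (forall j, J j -> forall x, P (j *: x)) ->
  forall x, P (dl x) -> exists y, P (x - dl y).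
Proof.
move=> Hss HJ x Px.
have HJQ : forall j, J j -> forall q : Qm, j *: q = 0.
  by move=> j Jj q; elim/qelim: q => y; rewrite -qpiZ; apply/(qpi_eq0 HPc); apply: HJ.
have Hac := cone_acyclic Q_dg Hss HJQ.
have [|q [_ Eq]] := Hac (qpi HPc x) I.
  by rewrite dQE; apply/(qpi_eq0 HPc).
by exists (val q); apply/(qpi_eq HPc); rewrite Eq.
Qed.

End QDG.


Section Main.
Variables (R : comPzRingType) (A : algType R) (gr : int -> A -> Prop) (d : A -> A).
Hypothesis HA : is_dg_algebra gr d.

Let HGA : graded_decomposition gr. Proof. by case: HA. Qed.
Let Hsc : forall n (r : R) a, gr n a -> gr n (r *: a). Proof. by case: HA => _ []. Qed.
Let Hmul : forall i j a b, gr i a -> gr j b -> gr (i + j) (a * b).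
Proof. by case: HA => _ [_ [_ []]]. Qed.
Let dD : forall a b, d (a + b) = d a + d b. Proof. by case: HA => _ [_ [_ [_ []]]]. Qed.
Let Hdeg : forall n a, gr n a -> gr (n + 1) (d a).
Proof. by case: HA => _ [_ [_ [_ [_ [_ []]]]]]. Qed.
Let dK : forall a, d (d a) = 0. Proof. by case: HA => _ [_ [_ [_ [_ [_ [_ []]]]]]]. Qed.
Let Hleib : forall n a b, gr n a -> d (a * b) = d a * b + ksign A n * a * d b.
Proof. by case: HA => _ [_ [_ [_ [_ [_ [_ []]]]]]]. Qed.

Lemma reg_dg : @is_dg_module R A gr d A^o gr d.
Proof.
split; last split; last split; last split; last split; last split.
- exact: HGA.
- by move=> n r m Hm; change (gr n (r%:A * m)); rewrite mulr_algl; apply: Hsc.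
- by move=> i j a m; apply: Hmul.
- exact: dD.
- exact: Hdeg.
- exact: dK.
- by move=> n a m Ha; change (d (a * m) = d a * m + ksign A n * (a * d m)); rewrite (Hleib _ Ha) mulrA.
Qed.

Let d0 : d 0 = 0. Proof. by apply: (addrI (d 0)); rewrite -dD !addr0. Qed.
Let dN a : d (- a) = - d a. Proof. by apply: (addrI (d a)); rewrite -dD !subrr d0. Qed.
Let dB a b : d (a - b) = d a - d b. Proof. by rewrite dD dN. Qed.

Local Notation J := (dgrad2 gr d).

Lemma J0 : J 0. Proof. by move=> S grS dl _ _ s; rewrite scale0r. Qed.
Lemma JD x y : J x -> J y -> J (x + y).
Proof. by move=> Jx Jy S grS dl HS Hs s; rewrite scalerDl (Jx _ _ _ HS Hs) (Jy _ _ _ HS Hs) addr0. Qed.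
Lemma JL a x : J x -> J (a * x).
Proof. by move=> Jx S grS dl HS Hs s; rewrite -scalerA (Jx _ _ _ HS Hs) scaler0. Qed.
Lemma JR a x : J x -> J (x * a).
Proof. by move=> Jx S grS dl HS Hs s; rewrite -scalerA (Jx _ _ _ HS Hs). Qed.
Lemma J_sum (I : Type) (r : seq I) (F : I -> A) : (forall i, J (F i)) -> J (\sum_(i <- r) F i).
Proof. by move=> HF; apply: (@big_ind _ J); [exact: J0|exact: JD|move=> i _; exact: HF]. Qed.

Lemma J_comp j : J j -> forall n, J (hcomp HGA j n).
Proof.
move=> Jj n S grS dl HS Hs v.
have [us Pf f0 Ej] := comp_spec HGA j.
have [_ [_ [_ [Hex Hun]]]] : graded_decomposition grS by case: HS.
have Hact : forall i j (a : A) (m : S), gr i a -> grS j m -> grS (i + j) (a *: m).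
  by case: HS => _ [_ []].
have [t [g [Pg ->]]] := Hex v.
rewrite scaler_sumr big1 // => m _.
case ns: (n \in sup HGA j); last by rewrite f0 ?ns // scale0r.
have := Hun [seq k + m | k <- sup HGA j] (fun k => hcomp HGA j (k - m) *: g m).
rewrite map_inj_uniq; last by move=> a b /addIr.
move=> /(_ us) H.
have := H _ _ (n + m); rewrite addrK; apply; last exact: map_f.
- by move=> k; have := Hact _ _ _ _ (Pf (k - m)) (Pg m); rewrite subrK.
rewrite big_map; under eq_bigr do rewrite addrK.
by rewrite -scaler_suml -Ej (Jj _ _ _ HS Hs).
Qed.

Lemma J_dhom n h : gr n h -> J h -> J (d h).
Proof.
move=> Hh Jh S grS dl HS Hs v.
have Hl : forall n (a : A) (m : S), gr n a ->
      dl (a *: m) = d a *: m + ksign A n *: (a *: dl m).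
  by case: HS => _ [_ [_ [_ [_ []]]]].
have := Hl _ _ v Hh; rewrite !(Jh _ _ _ HS Hs) scaler0 addr0 (dl0 HS) => E.
by rewrite -E.
Qed.

Lemma J_dg : @is_dg_submodule R A A^o gr d J.
Proof.
split; first exact: J0.
split; first exact: JD.
split; first by move=> a x; apply: JL.
split.
  move=> x Jx; have [us Pf f0 Ex] := comp_spec HGA x.
  exists (sup HGA x), (hcomp HGA x); split => // n; split => //; exact: J_comp.
move=> x Jx; have [us Pf f0 Ex] := comp_spec HGA x.
rewrite Ex (big_morph d dD d0); apply: J_sum => n.
by apply: (J_dhom (Pf n)); apply: J_comp.
Qed.


Let P0 : forall n, gr n 0. Proof. by case: HGA. Qed.
Let PD : forall n x y, gr n x -> gr n y -> gr n (x + y). Proof. by case: HGA => _ []. Qed.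

Lemma J_sub_M M : is_dg_maximal gr d M -> forall j, J j -> M j.
Proof.
move=> [HMd [[a0 na0] Hmax]] j Jj.
pose HPc := subm_of HMd.
have HQ := Q_dg reg_dg HMd.
have Mgr : forall x, M x -> exists (s : seq int) (f : int -> A),
      (forall n, gr n (f n) /\ M (f n)) /\ x = \sum_(n <- s) f n.
  by have [_ [_ [_ []]]] := HMd.
have qsum : forall (r : seq int) (F : int -> A),
    qpi HPc (\sum_(i <- r) F i) = \sum_(i <- r) qpi HPc (F i).
  by move=> r F; apply: (big_morph _ (qpiD HPc) (qpi0 HPc)).
have Hsim : dg_simple (grQ (HPd:=HMd)) (dQ (HPd:=HMd)).
  split.
    by exists (qpi HPc a0) => /(qpi_eq0 HPc).
  move=> N' [N0 [ND [NZ [Ngr Nd]]]].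
  pose P' (a : A) := N' (qpi HPc a).
  have P'0 : P' 0 by rewrite /P' qpi0.
  have P'D : forall x y, P' x -> P' y -> P' (x + y).
    by move=> x y; rewrite /P' qpiD; apply: ND.
  have HP' : @is_dg_submodule R A A^o gr d P'.
    split => //; split => //.
    split; first by move=> a x; rewrite /P' qpiZ; apply: NZ.
    split; last first.
      by move=> x; rewrite /P' -(dQE reg_dg HMd); apply: Nd.
    move=> x /Ngr [s [f [Hf Ex]]].
    pose G k := proj1_sig (constructive_indefinite_description _ (proj1 (Hf k))).
    have HGk k : gr k (G k) /\ f k = qpi HPc (G k).
      by rewrite /G; case: constructive_indefinite_description.
    have Mr : M (x - \sum_(k <- s) G k).
      apply/(qpi_eq0 HPc); rewrite qpiD -scaleN1r qpiZ scaleN1r qsum Ex.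
      apply/eqP; rewrite subr_eq0; apply/eqP; apply: eq_bigr => k _; by case: (HGk k).
    have [t [H [HH EH]]] := Mgr _ Mr.
    have [|u [h [uu Ph h0 E]]] := @norm_rep _ gr P0 PD P' P'0 P'D
       ([seq (k, G k) | k <- s] ++ [seq (k, H k) | k <- t]).
      move=> p; rewrite mem_cat => /orP [] /mapP [k _ ->] /=.
        by have [? E'] := HGk k; split => //; rewrite /P' -E'; case: (Hf k).
      have [? Mk] := HH k; split => //; rewrite /P'.
      by have /(qpi_eq0 HPc) -> := Mk; apply: N0.
    exists u, h; split => //.
    by rewrite -E big_cat !big_map /= -EH addrC subrK.
  have MP' : forall a, M a -> P' a.
    by move=> a Ma; rewrite /P'; have /(qpi_eq0 HPc) -> := Ma; apply: N0.
  case: (classic (exists a, ~ P' a)) => [Hex|Hall].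
    left => q Nq; rewrite -(qpiK q); apply/(qpi_eq0 HPc).
    by apply: (Hmax P' HP' Hex MP'); rewrite /P' qpiK.
  right => q; rewrite -(qpiK q).
  by apply: NNPP => H; apply: Hall; exists (val q).
have := Jj _ _ _ HQ Hsim (qpi HPc 1); rewrite -qpiZ => /(qpi_eq0 HPc).
by change (M (j * 1) -> M j); rewrite mulr1.
Qed.

End Main.

Unset Implicit Arguments.
Set Strict Implicit.

Theorem proposition3p8 (R : comPzRingType) (A : algType R)
    (gr : int -> A -> Prop) (d : A -> A) :
  is_dg_algebra gr d ->
  left_dg_semiprimary gr d ->
  (* (1) every dg-simple left dg-module is acyclic *)
  (forall (S : lmodType A) (grS : int -> S -> Prop) (delta : S -> S),
      is_dg_module gr d grS delta -> dg_simple grS delta -> acyclic delta) /\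
  (* (2) for a dg-maximal left dg-ideal M, H(M,d) -> H(A,d) is an iso *)
  (forall M : A -> Prop, is_dg_maximal gr d M ->
      (* injectivity *)
      (forall m, M m -> d m = 0 -> (exists a, m = d a) ->
         exists m', M m' /\ m = d m') /\
      (* surjectivity *)
      (forall a, d a = 0 -> exists m, M m /\ d m = 0 /\ exists b, a - m = d b)) /\
  (* (3) *)
  (acyclic_on (dgrad2 gr d) d -> acyclic d).
Proof.
move=> HA [Hss _].
have HR := reg_dg HA.
have dB : forall a b, d (a - b) = d a - d b.
  by move=> a b; rewrite (dlD HR) (dlN HR).
split.
  move=> S grS dl HS Hs; apply: (cone_acyclic HS Hss).
  by move=> x Jx m; apply: (Jx _ _ _ HS Hs).
split.
  move=> M HM.
  have HMd : @is_dg_submodule R A A^o gr d M by case: HM.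
  have HJ : forall j, dgrad2 gr d j -> forall x : A^o, M (j *: x).
    by move=> j Jj x; apply: (J_sub_M HA HM); apply: JR.
  have Hrel := rel_acyclic HR HMd Hss HJ.
  split.
    move=> m Mm dm [a Ea]; subst m.
    have [y My] := Hrel a Mm.
    by exists (a - d y); split => //; rewrite dB (dlK HR) subr0.
  move=> a da.
  have [|y My] := Hrel a; first by rewrite da; case: HMd.
  exists (a - d y); split => //; split; first by rewrite dB da (dlK HR) subrr.
  by exists y; rewrite opprB addrC subrK.
move=> HJac x _ dx.
have HJ : forall j, dgrad2 gr d j -> forall x : A^o, dgrad2 gr d (j *: x).
  by move=> j Jj y; apply: JR.
have [|y Jy] := rel_acyclic HR (J_dg HA) Hss HJ (x := x).
  by rewrite dx; apply: J0.
have [|j' [Jj' E]] := HJac _ Jy; first by rewrite dB dx (dlK HR) subrr.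
exists (y + j'); split => //.
by rewrite (dlD HR) -E addrC subrK.
Qed.
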